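(* Let $\lambda>0$ be constant and let $\alpha:[-1,1]\times[0,\infty)\to\mathbb{R}^2$ be a solution of the length-penalised elastic flow $\partial_t\alpha=(k_{ss}+\frac12k^3-\lambda k)\nu$ with generalised Neumann boundary conditions in the cone. Then $$\frac{d}{dt}\int_\alpha k_s^2\,ds\le-\frac18\int_\alpha k_{s^3}^2\,ds-\frac{13}{6}\bar k^4\int_\alpha k_s^2\,ds-2\lambda\int_\alpha k_{ss}^2\,ds+14\lambda\Big(\|k-\bar k\|_\infty^2+\bar k^2\Big)\int_\alpha k_s^2\,ds$$ $$\qquad-22\bar k^3\int_\alpha(k-\bar k)k_s^2\,ds+5\int_\alpha(k-\bar k)^2k_{ss}^2\,ds+10\bar k\int_\alpha(k-\bar k)k_{ss}^2\,ds.$$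
   Context: The cone: fix $0\le\theta_2<\theta_1<2\pi$; its boundary consists of the open rays $\bar\gamma_i=\{(\rho\cos\theta_i,\rho\sin\theta_i):\rho>0\}$, $i=1,2$. The flow evolves with generalised Neumann boundary conditions: for each $t$ the curve's interior lies in the open cone between the rays, $\alpha(-1,t)\in\bar\gamma_1$, $\alpha(1,t)\in\bar\gamma_2$, the curve meets each ray perpendicularly, and $k_s(\pm1,t)=0$ (neither end reaches the cone tip). Here $s$ is arc length, $\nu$ the outer unit normal, $k=-\langle\alpha_{ss},\nu\rangle$ the scalar curvature, $k_{s^\ell}$ its $\ell$-th arc-length derivative, $L$ the length, $\bar k=\frac1L\int_\alpha k\,ds$, and $\|\cdot\|_\infty$ the sup norm over the curve. Integrals are over $\alpha(\cdot,t)$ with respect to arc length. *)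

(* Defs.v *)
From Stdlib Require Import Reals.
From Coquelicot Require Import Coquelicot.
Open Scope R_scope.

Fixpoint dt_n (m : nat) (f : R -> R -> R) : R -> R -> R :=
  match m with
  | O => f
  | S m' => fun u t => Derive (fun s => dt_n m' f u s) t
  end.

Definition pd (n m : nat) (f : R -> R -> R) : R -> R -> R :=
  fun u t => Derive_n (fun v => dt_n m f v t) n u.

Definition smooth2 (f : R -> R -> R) : Prop :=
  forall (n m : nat),
    (forall u t, ex_derive (fun v => pd n m f v t) u /\
                 ex_derive (fun s => pd n m f u s) t) /\
    (forall p : R * R,
       continuous (fun q : R * R => pd n m f (fst q) (snd q)) p) /\
    (forall p : R * R,
       continuous (fun q : R * R => Derive (fun s => pd n m f (fst q) s) (snd q)) p).

Definition speed (x y : R -> R) (u : R) : R :=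
  sqrt ((Derive x u) ^ 2 + (Derive y u) ^ 2).

Definition ds (x y : R -> R) (f : R -> R) : R -> R :=
  fun u => Derive f u / speed x y u.

Fixpoint ds_n (x y : R -> R) (n : nat) (f : R -> R) : R -> R :=
  match n with
  | O => f
  | S n' => ds x y (ds_n x y n' f)
  end.

(* outer unit normal nu = J tau, J = counterclockwise rotation by pi/2,
   tau = alpha_s; the curve runs from the ray theta1 to the ray theta2
   (theta2 < theta1), i.e. clockwise around the tip, so J tau points
   away from the tip (outer). *)
Definition nu1 (x y : R -> R) : R -> R := fun u => - ds x y y u.
Definition nu2 (x y : R -> R) : R -> R := fun u => ds x y x u.

Definition curv (x y : R -> R) : R -> R :=
  fun u => - (ds_n x y 2 x u * nu1 x y u + ds_n x y 2 y u * nu2 x y u).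

Definition kder (x y : R -> R) (l : nat) : R -> R := ds_n x y l (curv x y).

Definition arcint (x y : R -> R) (f : R -> R) : R :=
  RInt (fun u => f u * speed x y u) (-1) 1.

Definition length (x y : R -> R) : R := arcint x y (fun _ => 1).

Definition kbar (x y : R -> R) : R := arcint x y (curv x y) / length x y.

Definition supnorm (f : R -> R) : R :=
  real (Lub_Rbar (fun r => exists u, -1 <= u <= 1 /\ r = Rabs (f u))).

Definition on_ray (th : R) (p1 p2 : R) : Prop :=
  exists rho, 0 < rho /\ p1 = rho * cos th /\ p2 = rho * sin th.

Definition in_open_cone (th1 th2 : R) (p1 p2 : R) : Prop :=
  exists rho th, 0 < rho /\ th2 < th < th1 /\
                 p1 = rho * cos th /\ p2 = rho * sin th.

Definition elastic_flow_cone (lam th1 th2 : R) (X Y : R -> R -> R) : Prop :=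
  smooth2 X /\ smooth2 Y /\
  (forall u t, -1 <= u <= 1 -> 0 <= t ->
     speed (fun v => X v t) (fun v => Y v t) u <> 0) /\
  (forall u t, -1 <= u <= 1 -> 0 <= t ->
     let x := fun v => X v t in
     let y := fun v => Y v t in
     let V := kder x y 2 u + (1/2) * (curv x y u) ^ 3 - lam * curv x y u in
     Derive (fun s => X u s) t = V * nu1 x y u /\
     Derive (fun s => Y u s) t = V * nu2 x y u) /\
  (forall t, 0 <= t ->
     let x := fun v => X v t in
     let y := fun v => Y v t in
     (forall u, -1 < u < 1 -> in_open_cone th1 th2 (x u) (y u)) /\
     on_ray th1 (x (-1)) (y (-1)) /\
     on_ray th2 (x 1) (y 1) /\
     Derive x (-1) * cos th1 + Derive y (-1) * sin th1 = 0 /\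
     Derive x 1 * cos th2 + Derive y 1 * sin th2 = 0 /\
     kder x y 1 (-1) = 0 /\
     kder x y 1 1 = 0).

(* Main.v *)
Require Import Defs.
From Stdlib Require Import Reals Lra Nsatz.
From Coquelicot Require Import Coquelicot.
Open Scope R_scope.

Lemma ballR (x : R) (e : posreal) y : Rabs (y - x) < e -> ball x e y.
Proof. intros H. exact H. Qed.
Lemma ballR' (x : R) (e : posreal) y : ball x e y -> Rabs (y - x) < e.
Proof. intros H. exact H. Qed.

Definition Du (F : R -> R -> R) : R -> R -> R := fun u s => Derive (fun v => F v s) u.
Definition Dt (F : R -> R -> R) : R -> R -> R := fun u s => Derive (fun z => F u z) s.
Definition isopen2 (Om : R -> R -> Prop) := forall u s, Om u s -> locally_2d Om u s.

Fixpoint G (Om : R -> R -> Prop) (n : nat) (F : R -> R -> R) : Prop :=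
  match n with
  | O => forall u s, Om u s -> continuity_2d_pt F u s
  | S n => (forall u s, Om u s -> continuity_2d_pt F u s /\
              ex_derive (fun v => F v s) u /\ ex_derive (fun z => F u z) s)
           /\ G Om n (Du F) /\ G Om n (Dt F)
  end.

Lemma G_cont Om n F u s : G Om n F -> Om u s -> continuity_2d_pt F u s.
Proof. destruct n; simpl. auto. intros [H _] h; apply H; auto. Qed.

Lemma G_mono Om n F : G Om (S n) F -> G Om n F.
Proof.
  revert F; induction n; intros F H.
  - simpl in *. intros u s h. apply H; auto.
  - destruct H as [H1 [H2 H3]]. split; [exact H1|]. split; apply IHn; auto.
Qed.

Lemma G_exu Om n F u s : G Om (S n) F -> Om u s -> ex_derive (fun v => F v s) u.
Proof. intros [H _] h; apply H; auto. Qed.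
Lemma G_ext' Om n F u s : G Om (S n) F -> Om u s -> ex_derive (fun z => F u z) s.
Proof. intros [H _] h; apply H; auto. Qed.
Lemma G_Du Om n F : G Om (S n) F -> G Om n (Du F).
Proof. intros [_ [H _]]; auto. Qed.
Lemma G_Dt Om n F : G Om (S n) F -> G Om n (Dt F).
Proof. intros [_ [_ H]]; auto. Qed.

Lemma loc2_u (P : R -> R -> Prop) u s : locally_2d P u s -> locally u (fun v => P v s).
Proof.
  intros [d Hd]. exists d. intros y Hy. apply Hd. apply ballR'; auto.
  rewrite Rminus_diag, Rabs_R0. apply cond_pos.
Qed.
Lemma loc2_s (P : R -> R -> Prop) u s : locally_2d P u s -> locally s (fun z => P u z).
Proof.
  intros [d Hd]. exists d. intros y Hy. apply Hd.
  rewrite Rminus_diag, Rabs_R0. apply cond_pos. apply ballR'; auto.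
Qed.

Lemma loc2_and (P Q : R -> R -> Prop) u s : locally_2d P u s -> locally_2d Q u s ->
  locally_2d (fun a b => P a b /\ Q a b) u s.
Proof.
  intros [d1 H1] [d2 H2].
  assert (hp : 0 < Rmin d1 d2) by (apply Rmin_pos; apply cond_pos).
  exists (mkposreal _ hp). simpl. intros a b ha hb.
  split; [apply H1|apply H2]; eapply Rlt_le_trans; eauto;
  first [apply Rmin_l | apply Rmin_r].
Qed.

Lemma loc2_impl (P Q : R -> R -> Prop) u s : locally_2d P u s ->
  (forall a b, P a b -> Q a b) -> locally_2d Q u s.
Proof. intros [d H] HPQ. exists d. auto. Qed.

Lemma G_ext Om n F H : isopen2 Om -> (forall u s, Om u s -> F u s = H u s) ->
  G Om n F -> G Om n H.
Proof.
  intros Hop. revert F H; induction n; intros F H Heq HF.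
  - simpl in *. intros u s h. apply continuity_2d_pt_ext_loc with F.
    apply loc2_impl with Om; auto. apply HF; auto.
  - destruct HF as [H1 [H2 H3]]. split; [|split].
    + intros u s h. destruct (H1 u s h) as [c [d1 d2]]. split; [|split].
      * apply continuity_2d_pt_ext_loc with F; auto.
        apply loc2_impl with Om; auto.
      * apply ex_derive_ext_loc with (fun v => F v s); auto.
        apply loc2_u with (P := fun a b => F a b = H a b).
        apply loc2_impl with Om; auto.
      * apply ex_derive_ext_loc with (fun z => F u z); auto.
        apply loc2_s with (P := fun a b => F a b = H a b).
        apply loc2_impl with Om; auto.
    + apply IHn with (Du F); auto. intros u s h. unfold Du.
      apply Derive_ext_loc.
      apply loc2_u with (P := fun a b => F a b = H a b).
      apply loc2_impl with Om; auto.
    + apply IHn with (Dt F); auto. intros u s h. unfold Dt.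
      apply Derive_ext_loc.
      apply loc2_s with (P := fun a b => F a b = H a b).
      apply loc2_impl with Om; auto.
Qed.

Lemma exd_plus (f g : R -> R) x : ex_derive f x -> ex_derive g x -> ex_derive (fun y => f y + g y) x.
Proof. intros; apply (ex_derive_plus f g); auto. Qed.
Lemma exd_minus (f g : R -> R) x : ex_derive f x -> ex_derive g x -> ex_derive (fun y => f y - g y) x.
Proof. intros; apply (ex_derive_minus f g); auto. Qed.
Lemma exd_opp (f : R -> R) x : ex_derive f x -> ex_derive (fun y => - f y) x.
Proof. intros; apply (ex_derive_opp f); auto. Qed.
Lemma Dplus (f g : R -> R) x : ex_derive f x -> ex_derive g x -> Derive (fun y => f y + g y) x = Derive f x + Derive g x.
Proof. intros; apply (Derive_plus f g); auto. Qed.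
Lemma Dminus (f g : R -> R) x : ex_derive f x -> ex_derive g x -> Derive (fun y => f y - g y) x = Derive f x - Derive g x.
Proof. intros; apply (Derive_minus f g); auto. Qed.

Lemma G_const Om n c : isopen2 Om -> G Om n (fun _ _ => c).
Proof.
  intros Hop. revert c; induction n; intros c.
  - simpl. intros; apply continuity_2d_pt_const.
  - split; [|split].
    + intros u s h. split; [apply continuity_2d_pt_const|split; apply ex_derive_const].
    + apply G_ext with (fun _ _ => 0); auto. intros; unfold Du; now rewrite Derive_const.
    + apply G_ext with (fun _ _ => 0); auto. intros; unfold Dt; now rewrite Derive_const.
Qed.

Lemma G_plus Om n F H : isopen2 Om -> G Om n F -> G Om n H -> G Om n (fun u s => F u s + H u s).
Proof.
  intros Hop. revert F H; induction n; intros F H HF HH.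
  - simpl in *. intros; apply continuity_2d_pt_plus; auto.
  - split; [|split].
    + intros u s h. split; [apply continuity_2d_pt_plus; eapply G_cont; eauto|split].
      * apply exd_plus; eapply G_exu; eauto.
      * apply exd_plus; eapply G_ext'; eauto.
    + apply G_ext with (fun u s => Du F u s + Du H u s); auto.
      intros u s h; unfold Du. rewrite Dplus; auto; eapply G_exu; eauto.
      apply IHn; apply G_Du; auto.
    + apply G_ext with (fun u s => Dt F u s + Dt H u s); auto.
      intros u s h; unfold Dt. rewrite Dplus; auto; eapply G_ext'; eauto.
      apply IHn; apply G_Dt; auto.
Qed.

Lemma G_opp Om n F : isopen2 Om -> G Om n F -> G Om n (fun u s => - F u s).
Proof.
  intros Hop. revert F; induction n; intros F HF.
  - simpl in *. intros; apply continuity_2d_pt_opp; auto.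
  - split; [|split].
    + intros u s h. split; [apply continuity_2d_pt_opp; eapply G_cont; eauto|split].
      * apply exd_opp; eapply G_exu; eauto.
      * apply exd_opp; eapply G_ext'; eauto.
    + apply G_ext with (fun u s => - Du F u s); auto.
      intros u s h; unfold Du. rewrite Derive_opp; auto.
      apply IHn; apply G_Du; auto.
    + apply G_ext with (fun u s => - Dt F u s); auto.
      intros u s h; unfold Dt. rewrite Derive_opp; auto.
      apply IHn; apply G_Dt; auto.
Qed.

Lemma G_mult Om n F H : isopen2 Om -> G Om n F -> G Om n H -> G Om n (fun u s => F u s * H u s).
Proof.
  intros Hop. revert F H; induction n; intros F H HF HH.
  - simpl in *. intros; apply continuity_2d_pt_mult; auto.
  - split; [|split].
    + intros u s h. split; [apply continuity_2d_pt_mult; eapply G_cont; eauto|split].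
      * apply ex_derive_mult; eapply G_exu; eauto.
      * apply ex_derive_mult; eapply G_ext'; eauto.
    + apply G_ext with (fun u s => Du F u s * H u s + F u s * Du H u s); auto.
      intros u s h; unfold Du. rewrite Derive_mult; auto; eapply G_exu; eauto.
      apply G_plus; auto; apply IHn; auto using G_Du, G_mono.
    + apply G_ext with (fun u s => Dt F u s * H u s + F u s * Dt H u s); auto.
      intros u s h; unfold Dt. rewrite Derive_mult; auto; eapply G_ext'; eauto.
      apply G_plus; auto; apply IHn; auto using G_Dt, G_mono.
Qed.

Lemma G_inv Om n F : isopen2 Om -> (forall u s, Om u s -> F u s <> 0) ->
  G Om n F -> G Om n (fun u s => / F u s).
Proof.
  intros Hop Hnz. revert F Hnz; induction n; intros F Hnz HF.
  - simpl in *. intros; apply continuity_2d_pt_inv; auto.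
  - split; [|split].
    + intros u s h. split; [apply continuity_2d_pt_inv; [eapply G_cont; eauto|auto]|split].
      * apply ex_derive_inv; auto; eapply G_exu; eauto.
      * apply ex_derive_inv; auto; eapply G_ext'; eauto.
    + apply G_ext with (fun u s => - Du F u s * (/ F u s * / F u s)); auto.
      intros u s h; unfold Du. rewrite Derive_inv; auto. field; auto. eapply G_exu; eauto.
      apply G_mult; auto. apply G_opp; auto using G_Du.
      apply G_mult; auto; apply IHn; auto using G_mono.
    + apply G_ext with (fun u s => - Dt F u s * (/ F u s * / F u s)); auto.
      intros u s h; unfold Dt. rewrite Derive_inv; auto. change (Derive (F u) s) with (Derive (fun z => F u z) s). field; auto. eapply G_ext'; eauto.
      apply G_mult; auto. apply G_opp; auto using G_Dt.
      apply G_mult; auto; apply IHn; auto using G_mono.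
Qed.

Lemma Derive_sqrt_ f x : ex_derive f x -> 0 < f x ->
  Derive (fun z => sqrt (f z)) x = Derive f x / (2 * sqrt (f x)).
Proof.
  intros [df Hd] hp. apply is_derive_unique.
  rewrite (is_derive_unique _ _ _ Hd). apply is_derive_sqrt; auto.
Qed.
Lemma ex_derive_sqrt_ f x : ex_derive f x -> 0 < f x -> ex_derive (fun z => sqrt (f z)) x.
Proof. intros [df Hd] hp. eexists. apply is_derive_sqrt; eauto. Qed.

Lemma G_sqrt Om n F : isopen2 Om -> (forall u s, Om u s -> 0 < F u s) ->
  G Om n F -> G Om n (fun u s => sqrt (F u s)).
Proof.
  intros Hop Hp. revert F Hp; induction n; intros F Hp HF.
  - simpl in *. intros u s h. apply continuity_1d_2d_pt_comp; auto.
    apply continuity_pt_sqrt. apply Rlt_le; auto.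
  - split; [|split].
    + intros u s h. split; [|split].
      * apply continuity_1d_2d_pt_comp. apply continuity_pt_sqrt. apply Rlt_le; auto.
        eapply G_cont; eauto.
      * apply ex_derive_sqrt_; auto; eapply G_exu; eauto.
      * apply ex_derive_sqrt_; auto; eapply G_ext'; eauto.
    + apply G_ext with (fun u s => Du F u s * / (2 * sqrt (F u s))); auto.
      intros u s h; unfold Du. rewrite Derive_sqrt_; auto. eapply G_exu; eauto.
      apply G_mult; auto using G_Du. apply G_inv; auto.
      intros u s h. specialize (Hp u s h). apply Rgt_not_eq. apply Rmult_lt_0_compat. lra. apply sqrt_lt_R0; auto.
      apply G_mult; auto using G_const. apply IHn; auto using G_mono.
    + apply G_ext with (fun u s => Dt F u s * / (2 * sqrt (F u s))); auto.
      intros u s h; unfold Dt. rewrite Derive_sqrt_; auto. eapply G_ext'; eauto.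
      apply G_mult; auto using G_Dt. apply G_inv; auto.
      intros u s h. specialize (Hp u s h). apply Rgt_not_eq. apply Rmult_lt_0_compat. lra. apply sqrt_lt_R0; auto.
      apply G_mult; auto using G_const. apply IHn; auto using G_mono.
Qed.

Lemma cont_conv (f : R -> R -> R) u s :
  continuous (fun q : R * R => f (fst q) (snd q)) (u, s) -> continuity_2d_pt f u s.
Proof. intros H. apply continuity_2d_pt_filterlim. exact H. Qed.

Lemma Du_pd F a b u s : Du (pd a b F) u s = pd (S a) b F u s.
Proof. reflexivity. Qed.

Lemma locally_2d_all (P : R -> R -> Prop) u s : (forall a b, P a b) -> locally_2d P u s.
Proof. intros H. exists (mkposreal 1 Rlt_0_1). intros; auto. Qed.

Lemma Dt_pd F : smooth2 F -> forall a b u s, Dt (pd a b F) u s = pd a (S b) F u s.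
Proof.
  intros HF a. induction a; intros b u s.
  - reflexivity.
  - unfold Dt. change (pd (S a) b F) with (Du (pd a b F)).
    symmetry.
    transitivity (Du (Dt (pd a b F)) u s).
    { unfold Du. apply Derive_ext. intros v. rewrite IHa. reflexivity. }
    unfold Du, Dt.
    apply Schwarz.
    + apply locally_2d_all. intros x y. split; [|split; [|split]].
      * apply (proj1 (proj1 (HF a b) x y)).
      * apply (proj2 (proj1 (HF a b) x y)).
      * eapply ex_derive_ext. intros z. symmetry. apply IHa.
        apply (proj1 (proj1 (HF a (S b)) x y)).
      * apply (proj2 (proj1 (HF (S a) b) x y)).
    + apply continuity_2d_pt_ext with (pd (S a) (S b) F).
      { intros x y. unfold pd at 2. simpl. apply Derive_ext. intros z. symmetry. apply IHa. }
      apply cont_conv. apply (proj1 (proj2 (HF (S a) (S b)))).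
    + apply cont_conv with (f := fun x y => Derive (fun z => pd (S a) b F x z) y).
      apply (proj2 (proj2 (HF (S a) b))).
Qed.

Lemma G_pd Om F : isopen2 Om -> smooth2 F -> forall n a b, G Om n (pd a b F).
Proof.
  intros Hop HF n. induction n; intros a b.
  - simpl. intros u s _. apply cont_conv. apply (proj1 (proj2 (HF a b))).
  - split; [|split].
    + intros u s _. split; [apply cont_conv; apply (proj1 (proj2 (HF a b)))|].
      apply (proj1 (HF a b)).
    + apply G_ext with (pd (S a) b F); auto.
    + apply G_ext with (pd a (S b) F); auto. intros; symmetry; apply Dt_pd; auto.
Qed.

Set Default Proof Using "All".

Definition Ginf Om F := forall n, G Om n F.

Lemma G_pow Om n F k : isopen2 Om -> G Om n F -> G Om n (fun u s => F u s ^ k).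
Proof.
  intros Hop HF. induction k.
  - change (G Om n (fun _ _ => 1)); apply G_const; auto.
  - change (G Om n (fun u s => F u s * F u s ^ k)). apply G_mult; auto.
Qed.

Section Geo.
End Geo.

Definition sig (X Y : R -> R -> R) : R -> R -> R :=
  fun u s => speed (fun v => X v s) (fun v => Y v s) u.
Definition dsF X Y (F : R -> R -> R) : R -> R -> R := fun u s => Du F u s / sig X Y u s.
Definition t1 X Y := dsF X Y X.
Definition t2 X Y := dsF X Y Y.
Definition kk (X Y : R -> R -> R) : R -> R -> R :=
  fun u s => curv (fun v => X v s) (fun v => Y v s) u.
Definition Kn (X Y : R -> R -> R) n : R -> R -> R :=
  fun u s => kder (fun v => X v s) (fun v => Y v s) n u.
Definition VV lam X Y : R -> R -> R :=
  fun u s => Kn X Y 2 u s + 1/2 * kk X Y u s ^ 3 - lam * kk X Y u s.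
Definition Om (X Y : R -> R -> R) : R -> R -> Prop :=
  fun u s => 0 < Du X u s ^ 2 + Du Y u s ^ 2.

Lemma sig_eq X Y u s : sig X Y u s = sqrt (Du X u s ^ 2 + Du Y u s ^ 2).
Proof. reflexivity. Qed.
Lemma kk_eq X Y u s : kk X Y u s =
  dsF X Y (t1 X Y) u s * t2 X Y u s - dsF X Y (t2 X Y) u s * t1 X Y u s.
Proof.
  change (kk X Y u s) with
   (- (dsF X Y (t1 X Y) u s * (- t2 X Y u s) + dsF X Y (t2 X Y) u s * t1 X Y u s)).
  ring.
Qed.
Lemma Kn_S X Y n u s : Kn X Y (S n) u s = dsF X Y (Kn X Y n) u s.
Proof. reflexivity. Qed.
Lemma Kn_0 X Y u s : Kn X Y 0 u s = kk X Y u s.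
Proof. reflexivity. Qed.

Lemma Om_open X Y : smooth2 X -> smooth2 Y -> isopen2 (Om X Y).
Proof.
  intros HX HY u s h.
  assert (Hc : continuity_2d_pt (fun a b => Du X a b ^ 2 + Du Y a b ^ 2) u s).
  { assert (c1 : continuity_2d_pt (Du X) u s).
    { apply cont_conv. apply (proj1 (proj2 (HX 1%nat 0%nat))). }
    assert (c2 : continuity_2d_pt (Du Y) u s).
    { apply cont_conv. apply (proj1 (proj2 (HY 1%nat 0%nat))). }
    apply continuity_2d_pt_ext with (fun a b => Du X a b * Du X a b + Du Y a b * Du Y a b).
    intros; ring.
    apply continuity_2d_pt_plus; apply continuity_2d_pt_mult; auto. }
  apply continuity_2d_pt_neq_0 in Hc; [| apply Rgt_not_eq; exact h].
  apply loc2_impl with (1 := Hc). intros a b hab. unfold Om.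
  assert (0 <= Du X a b ^ 2 + Du Y a b ^ 2) by nra.
  destruct H as [H|H]; auto. exfalso; apply hab; auto.
Qed.

Section S.
Context (X Y : R -> R -> R) (HX : smooth2 X) (HY : smooth2 Y).
Local Notation Hop := (Om_open X Y HX HY).
Lemma Hop_P3 : isopen2 (Om X Y). Proof. apply Om_open; auto. Qed.
#[local] Hint Resolve Hop_P3 : core.

Lemma Gi_X : Ginf (Om X Y) X.
Proof. intros n. apply (G_pd _ X Hop HX n 0 0). Qed.
Lemma Gi_Y : Ginf (Om X Y) Y.
Proof. intros n. apply (G_pd _ Y Hop HY n 0 0). Qed.
Lemma Gi_Du F : Ginf (Om X Y) F -> Ginf (Om X Y) (Du F).
Proof. intros H n. apply G_Du. apply H. Qed.
Lemma Gi_Dt F : Ginf (Om X Y) F -> Ginf (Om X Y) (Dt F).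
Proof. intros H n. apply G_Dt. apply H. Qed.
Lemma Gi_plus F H : Ginf (Om X Y) F -> Ginf (Om X Y) H -> Ginf (Om X Y) (fun u s => F u s + H u s).
Proof. intros A B n. apply G_plus; auto. Qed.
Lemma Gi_mult F H : Ginf (Om X Y) F -> Ginf (Om X Y) H -> Ginf (Om X Y) (fun u s => F u s * H u s).
Proof. intros A B n. apply G_mult; auto. Qed.
Lemma Gi_opp F : Ginf (Om X Y) F -> Ginf (Om X Y) (fun u s => - F u s).
Proof. intros A n. apply G_opp; auto. Qed.
Lemma Gi_minus F H : Ginf (Om X Y) F -> Ginf (Om X Y) H -> Ginf (Om X Y) (fun u s => F u s - H u s).
Proof. intros A B. apply Gi_plus; auto. apply Gi_opp; auto. Qed.
Lemma Gi_const c : Ginf (Om X Y) (fun _ _ => c).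
Proof. intros n. apply G_const; auto. Qed.
Lemma Gi_pow F k : Ginf (Om X Y) F -> Ginf (Om X Y) (fun u s => F u s ^ k).
Proof. intros A n. apply G_pow; auto. Qed.
Lemma Gi_ext F H : (forall u s, Om X Y u s -> F u s = H u s) -> Ginf (Om X Y) F -> Ginf (Om X Y) H.
Proof. intros E A n. eapply G_ext; eauto. Qed.

Lemma sig_pos u s : Om X Y u s -> 0 < sig X Y u s.
Proof. intros h. rewrite sig_eq. apply sqrt_lt_R0. exact h. Qed.

Lemma Gi_sig : Ginf (Om X Y) (sig X Y).
Proof.
  intros n. unfold sig, speed. apply G_sqrt; auto.
  apply G_plus; auto; apply G_pow; auto; apply G_Du; [apply Gi_X|apply Gi_Y].
Qed.
Lemma Gi_dsF F : Ginf (Om X Y) F -> Ginf (Om X Y) (dsF X Y F).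
Proof.
  intros A n. unfold dsF, Rdiv. apply G_mult; auto. apply G_Du; apply A.
  apply G_inv; auto. intros u s h. apply Rgt_not_eq. apply sig_pos; auto. apply Gi_sig.
Qed.
Lemma Gi_t1 : Ginf (Om X Y) (t1 X Y).
Proof. apply Gi_dsF, Gi_X. Qed.
Lemma Gi_t2 : Ginf (Om X Y) (t2 X Y).
Proof. apply Gi_dsF, Gi_Y. Qed.
Lemma Gi_kk : Ginf (Om X Y) (kk X Y).
Proof.
  apply Gi_ext with (fun u s => dsF X Y (t1 X Y) u s * t2 X Y u s - dsF X Y (t2 X Y) u s * t1 X Y u s).
  intros; symmetry; apply kk_eq.
  apply Gi_minus; apply Gi_mult; auto using Gi_dsF, Gi_t1, Gi_t2.
Qed.
Lemma Gi_Kn n : Ginf (Om X Y) (Kn X Y n).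
Proof.
  induction n. apply Gi_kk.
  change (Kn X Y (S n)) with (dsF X Y (Kn X Y n)). apply Gi_dsF; auto.
Qed.
Lemma Gi_VV lam : Ginf (Om X Y) (VV lam X Y).
Proof.
  unfold VV. apply Gi_minus. apply Gi_plus. apply Gi_Kn.
  apply Gi_mult. apply Gi_const. apply Gi_pow, Gi_kk.
  apply Gi_mult. apply Gi_const. apply Gi_kk.
Qed.
End S.

Set Default Proof Using "All".

Section S.
Context (X Y : R -> R -> R) (HX : smooth2 X) (HY : smooth2 Y).
Local Notation Hop := (Om_open X Y HX HY).
Lemma Hop_P4 : isopen2 (Om X Y). Proof. apply Om_open; auto. Qed.
#[local] Hint Resolve Hop_P4 : core.

Lemma exu F u s : Ginf (Om X Y) F -> (Om X Y) u s -> ex_derive (fun v => F v s) u.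
Proof. intros H h. apply (G_exu _ 0 F u s (H 1%nat) h). Qed.
Lemma ext F u s : Ginf (Om X Y) F -> (Om X Y) u s -> ex_derive (fun z => F u z) s.
Proof. intros H h. apply (G_ext' _ 0 F u s (H 1%nat) h). Qed.
Lemma cont2 F u s : Ginf (Om X Y) F -> (Om X Y) u s -> continuity_2d_pt F u s.
Proof. intros H h. apply (G_cont _ 0 F u s (H 0%nat) h). Qed.

Lemma Du_ds F u s : (Om X Y) u s -> Du F u s = sig X Y u s * dsF X Y F u s.
Proof. intros h. unfold dsF. field. apply Rgt_not_eq, sig_pos; auto. Qed.

Lemma geo0 u s : (Om X Y) u s -> t1 X Y u s ^ 2 + t2 X Y u s ^ 2 = 1.
Proof.
  intros h. pose proof (sig_pos X Y HX HY u s h) as hs.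
  unfold t1, t2, dsF. assert (E : sig X Y u s ^ 2 = Du X u s ^ 2 + Du Y u s ^ 2).
  { rewrite sig_eq. rewrite <- Rsqr_pow2. rewrite Rsqr_sqrt; auto. apply Rlt_le; exact h. }
  field_simplify; [|lra]. rewrite <- E. field. lra.
Qed.

Lemma geo1 u s : (Om X Y) u s -> t1 X Y u s * dsF X Y (t1 X Y) u s + t2 X Y u s * dsF X Y (t2 X Y) u s = 0.
Proof.
  intros h. pose proof (sig_pos X Y HX HY u s h) as hs.
  assert (E : Derive (fun v => t1 X Y v s ^ 2 + t2 X Y v s ^ 2) u = 0).
  { rewrite (Derive_ext_loc _ (fun _ => 1)). apply Derive_const.
    apply loc2_u with (P := fun a b => t1 X Y a b ^ 2 + t2 X Y a b ^ 2 = 1).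
    apply loc2_impl with (Om X Y). apply Hop; auto. intros; apply geo0; auto. }
  assert (e1 := exu (t1 X Y) u s (Gi_t1 X Y HX HY) h).
  assert (e2 := exu (t2 X Y) u s (Gi_t2 X Y HX HY) h).
  rewrite Dplus in E; try (apply ex_derive_pow; auto).
  rewrite (Derive_pow (fun v => t1 X Y v s)) in E; auto.
  rewrite (Derive_pow (fun v => t2 X Y v s)) in E; auto.
  change (Derive (fun v => t1 X Y v s) u) with (Du (t1 X Y) u s) in E.
  change (Derive (fun v => t2 X Y v s) u) with (Du (t2 X Y) u s) in E.
  rewrite !Du_ds in E; auto. simpl in E.
  apply Rmult_eq_reg_l with (2 * sig X Y u s). lra. lra.
Qed.

Lemma geo2a u s : (Om X Y) u s -> dsF X Y (t1 X Y) u s = kk X Y u s * t2 X Y u s.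
Proof.
  intros h. rewrite kk_eq. pose proof (geo0 u s h) as H. pose proof (geo1 u s h) as H0.
  set (a := t1 X Y u s) in *. set (b := t2 X Y u s) in *.
  set (d1 := dsF X Y (t1 X Y) u s) in *. set (d2 := dsF X Y (t2 X Y) u s) in *.
  assert (E : d1 - (d1*b - d2*a)*b = a*(a*d1+b*d2) + d1*(1 - (a^2+b^2))) by ring.
  rewrite H, H0 in E. lra.
Qed.
Lemma geo2b u s : (Om X Y) u s -> dsF X Y (t2 X Y) u s = - kk X Y u s * t1 X Y u s.
Proof.
  intros h. rewrite kk_eq. pose proof (geo0 u s h) as H. pose proof (geo1 u s h) as H0.
  set (a := t1 X Y u s) in *. set (b := t2 X Y u s) in *.
  set (d1 := dsF X Y (t1 X Y) u s) in *. set (d2 := dsF X Y (t2 X Y) u s) in *.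
  assert (E : d2 + (d1*b - d2*a)*a = b*(a*d1+b*d2) + d2*(1 - (a^2+b^2))) by ring.
  rewrite H, H0 in E. lra.
Qed.
End S.

Set Default Proof Using "All".

Lemma Du_mult (F H : R -> R -> R) (u s : R) : ex_derive (fun v => F v s) u -> ex_derive (fun v => H v s) u ->
  Du (fun a b => F a b * H a b) u s = Du F u s * H u s + F u s * Du H u s.
Proof. intros; unfold Du; cbv beta; apply (Derive_mult (fun v => F v s) (fun v => H v s)); auto. Qed.
Lemma Dt_mult (F H : R -> R -> R) (u s : R) : ex_derive (fun z => F u z) s -> ex_derive (fun z => H u z) s ->
  Dt (fun a b => F a b * H a b) u s = Dt F u s * H u s + F u s * Dt H u s.
Proof. intros; unfold Dt; cbv beta; apply (Derive_mult (fun z => F u z) (fun z => H u z)); auto. Qed.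
Lemma Du_opp (F : R -> R -> R) (u s : R) : Du (fun a b => - F a b) u s = - Du F u s.
Proof. unfold Du; cbv beta; apply (Derive_opp (fun v => F v s)). Qed.
Lemma Dt_opp (F : R -> R -> R) (u s : R) : Dt (fun a b => - F a b) u s = - Dt F u s.
Proof. unfold Dt; cbv beta; apply (Derive_opp (fun z => F u z)). Qed.
Lemma Du_plus (F H : R -> R -> R) (u s : R) : ex_derive (fun v => F v s) u -> ex_derive (fun v => H v s) u ->
  Du (fun a b => F a b + H a b) u s = Du F u s + Du H u s.
Proof. intros; unfold Du; cbv beta; apply (Dplus (fun v => F v s) (fun v => H v s)); auto. Qed.
Lemma Dt_plus (F H : R -> R -> R) (u s : R) : ex_derive (fun z => F u z) s -> ex_derive (fun z => H u z) s ->
  Dt (fun a b => F a b + H a b) u s = Dt F u s + Dt H u s.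
Proof. intros; unfold Dt; cbv beta; apply (Dplus (fun z => F u z) (fun z => H u z)); auto. Qed.
Lemma Dt_div (F H : R -> R -> R) (u s : R) : ex_derive (fun z => F u z) s -> ex_derive (fun z => H u z) s -> H u s <> 0 ->
  Dt (fun a b => F a b / H a b) u s = (Dt F u s * H u s - F u s * Dt H u s) / H u s ^ 2.
Proof. intros; unfold Dt; cbv beta; apply (Derive_div (fun z => F u z) (fun z => H u z)); auto. Qed.

Lemma Du_open (A B : R -> R -> R) t u : (forall v, -1 < v < 1 -> A v t = B v t) -> -1 < u < 1 ->
  Du A u t = Du B u t.
Proof.
  intros H hu. unfold Du. apply Derive_ext_loc.
  assert (hp : 0 < Rmin (u + 1) (1 - u)) by (apply Rmin_pos; lra).
  exists (mkposreal _ hp). intros y Hy. apply ballR' in Hy. simpl in Hy. apply H.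
  pose proof (Rmin_l (u+1) (1-u)). pose proof (Rmin_r (u+1) (1-u)).
  apply Rabs_def2 in Hy. lra.
Qed.

Section S.
Context (X Y : R -> R -> R) (HX : smooth2 X) (HY : smooth2 Y).
Local Notation Hop := (Om_open X Y HX HY).
Lemma Hop_P5 : isopen2 (Om X Y). Proof. apply Om_open; auto. Qed.
#[local] Hint Resolve Hop_P5 : core.

Lemma Schw F u s : Ginf (Om X Y) F -> Om X Y u s -> Dt (Du F) u s = Du (Dt F) u s.
Proof.
  intros HF h. unfold Du, Dt. symmetry. apply Schwarz.
  - apply loc2_impl with (Om X Y). apply Hop; auto. intros a b hab.
    split; [|split; [|split]].
    + apply (exu X Y HX HY); auto.
    + apply (ext X Y HX HY); auto.
    + apply (exu X Y HX HY (Dt F)); auto. apply (Gi_Dt X Y HX HY); auto.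
    + apply (ext X Y HX HY (Du F)); auto. apply (Gi_Du X Y HX HY); auto.
  - apply (cont2 X Y HX HY (Du (Dt F))); auto. apply (Gi_Du X Y HX HY), (Gi_Dt X Y HX HY); auto.
  - apply (cont2 X Y HX HY (Dt (Du F))); auto. apply (Gi_Dt X Y HX HY), (Gi_Du X Y HX HY); auto.
Qed.

Lemma Dt_sig u s : Om X Y u s -> Dt (sig X Y) u s =
  (Du X u s * Dt (Du X) u s + Du Y u s * Dt (Du Y) u s) / sig X Y u s.
Proof.
  intros h. pose proof (sig_pos X Y HX HY u s h) as hs.
  assert (e1 : ex_derive (fun z => Du X u z) s) by (apply (ext X Y HX HY); auto; apply (Gi_Du X Y HX HY), (Gi_X X Y HX HY)).
  assert (e2 : ex_derive (fun z => Du Y u z) s) by (apply (ext X Y HX HY); auto; apply (Gi_Du X Y HX HY), (Gi_Y X Y HX HY)).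
  unfold Dt at 1, sig, speed.
  rewrite Derive_sqrt_; [| apply exd_plus; apply ex_derive_pow; auto | exact h].
  rewrite Dplus; try (apply ex_derive_pow; auto).
  rewrite (Derive_pow (fun z => Du X u z)); auto.
  rewrite (Derive_pow (fun z => Du Y u z)); auto.
  change (sqrt (Du X u s ^ 2 + Du Y u s ^ 2)) with (sig X Y u s).
  unfold Dt. cbn [Nat.pred]. rewrite !pow_1. change (INR 2) with (1+1). change (sqrt (Derive (fun v => X v s) u ^ 2 + Derive (fun v => Y v s) u ^ 2)) with (sig X Y u s). field. lra.
Qed.
End S.

Lemma Du_minus (F H : R -> R -> R) (u s : R) : ex_derive (fun v => F v s) u -> ex_derive (fun v => H v s) u ->
  Du (fun a b => F a b - H a b) u s = Du F u s - Du H u s.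
Proof. intros; unfold Du; cbv beta; apply (Dminus (fun v => F v s) (fun v => H v s)); auto. Qed.
Lemma Dt_minus (F H : R -> R -> R) (u s : R) : ex_derive (fun z => F u z) s -> ex_derive (fun z => H u z) s ->
  Dt (fun a b => F a b - H a b) u s = Dt F u s - Dt H u s.
Proof. intros; unfold Dt; cbv beta; apply (Dminus (fun z => F u z) (fun z => H u z)); auto. Qed.
Lemma Dt_pow (F : R -> R -> R) n (u s : R) : ex_derive (fun z => F u z) s ->
  Dt (fun a b => F a b ^ n) u s = INR n * Dt F u s * F u s ^ Nat.pred n.
Proof. intros; unfold Dt; cbv beta; apply (Derive_pow (fun z => F u z)); auto. Qed.
Lemma Du_pow (F : R -> R -> R) n (u s : R) : ex_derive (fun v => F v s) u ->
  Du (fun a b => F a b ^ n) u s = INR n * Du F u s * F u s ^ Nat.pred n.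
Proof. intros; unfold Du; cbv beta; apply (Derive_pow (fun v => F v s)); auto. Qed.

Set Default Proof Using "All".

Section S0.
Context (X Y : R -> R -> R) (HX : smooth2 X) (HY : smooth2 Y).
Local Notation S := (sig X Y).
Local Notation T1 := (t1 X Y).
Local Notation T2 := (t2 X Y).
Local Notation k := (kk X Y).
Local Notation ds := (dsF X Y).
Local Notation O := (Om X Y).

Lemma gV lam : Ginf O (VV lam X Y). Proof. apply Gi_VV; auto. Qed.
Lemma gT1 : Ginf O T1. Proof. apply Gi_t1; auto. Qed.
Lemma gT2 : Ginf O T2. Proof. apply Gi_t2; auto. Qed.
Lemma gS : Ginf O S. Proof. apply Gi_sig; auto. Qed.
Lemma gk : Ginf O k. Proof. apply Gi_kk; auto. Qed.
Lemma gds F : Ginf O F -> Ginf O (ds F). Proof. apply Gi_dsF; auto. Qed.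
Lemma gX : Ginf O X. Proof. apply Gi_X; auto. Qed.
Lemma gY : Ginf O Y. Proof. apply Gi_Y; auto. Qed.
Lemma gDu F : Ginf O F -> Ginf O (Du F). Proof. apply Gi_Du; auto. Qed.
Lemma gKn n : Ginf O (Kn X Y n). Proof. apply Gi_Kn; auto. Qed.
#[local] Hint Resolve gV gT1 gT2 gS gk gds gX gY gDu gKn : core.

Lemma exd_mult_ (F H : R -> R -> R) u s : Ginf O F -> Ginf O H -> O u s -> ex_derive (fun z => F u z * H u z) s.
Proof. intros. apply ex_derive_mult; apply (ext X Y HX HY); auto. Qed.
Lemma xu F u s : Ginf O F -> O u s -> ex_derive (fun v => F v s) u.
Proof. apply exu; auto. Qed.
Lemma xt F u s : Ginf O F -> O u s -> ex_derive (fun z => F u z) s.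
Proof. apply ext; auto. Qed.
Lemma DS F u s : O u s -> Du F u s = S u s * ds F u s.
Proof. apply Du_ds; auto. Qed.
Lemma Spos u s : O u s -> 0 < S u s.
Proof. apply sig_pos; auto. Qed.
End S0.

Section S.
Context (X Y : R -> R -> R) (HX : smooth2 X) (HY : smooth2 Y) (lam : R).
Context (HO : forall u s, -1 <= u <= 1 -> 0 <= s -> Om X Y u s).
Context (HE : forall u s, -1 <= u <= 1 -> 0 <= s ->
   Dt X u s = VV lam X Y u s * - t2 X Y u s /\ Dt Y u s = VV lam X Y u s * t1 X Y u s).

Local Notation V := (VV lam X Y).
Local Notation S := (sig X Y).
Local Notation T1 := (t1 X Y).
Local Notation T2 := (t2 X Y).
Local Notation k := (kk X Y).
Local Notation ds := (dsF X Y).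
Local Notation O := (Om X Y).
#[local] Hint Resolve gV gT1 gT2 gS gk gds gX gY gDu gKn : core.
Local Notation xu := (xu X Y HX HY).
Local Notation xt := (xt X Y HX HY).
Local Notation DS := (DS X Y HX HY).
Local Notation Spos := (Spos X Y HX HY).
Local Notation exd_mult_ := (exd_mult_ X Y HX HY).

Section T.
Context (t : R) (ht : 0 <= t).

Lemma Ot u : -1 <= u <= 1 -> O u t.
Proof. intros; apply HO; auto. Qed.

Lemma DuDtX u : -1 < u < 1 ->
  Du (Dt X) u t = S u t * (ds V u t * - T2 u t + V u t * (k u t * T1 u t)).
Proof.
  intros hu. assert (h : O u t) by (apply Ot; lra).
  rewrite (Du_open (Dt X) (fun a b => V a b * - T2 a b) t u); [| intros; apply HE; lra | auto].
  rewrite Du_mult; [| apply xu; auto | apply exd_opp; apply xu; auto].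
  rewrite Du_opp. rewrite (DS V), (DS T2), geo2b; auto. ring.
Qed.
Lemma DuDtY u : -1 < u < 1 ->
  Du (Dt Y) u t = S u t * (ds V u t * T1 u t + V u t * (k u t * T2 u t)).
Proof.
  intros hu. assert (h : O u t) by (apply Ot; lra).
  rewrite (Du_open (Dt Y) (fun a b => V a b * T1 a b) t u); [| intros; apply HE; lra | auto].
  rewrite Du_mult; [| apply xu; auto | apply xu; auto].
  rewrite (DS V), (DS T1), geo2a; auto. ring.
Qed.

Lemma T1_ u : -1 < u < 1 -> Dt S u t = k u t * V u t * S u t.
Proof.
  intros hu. assert (h : O u t) by (apply Ot; lra). pose proof (Spos u t h) as hs.
  pose proof (geo0 X Y HX HY u t h) as g0.
  rewrite Dt_sig; auto. rewrite (Schw X Y HX HY X), (Schw X Y HX HY Y); auto.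
  rewrite DuDtX, DuDtY; auto. rewrite (DS X), (DS Y); auto.
  change (ds X) with T1. change (ds Y) with T2.
  apply (Rmult_eq_reg_r (S u t)); [|lra]. field_simplify; [|lra]. nsatz.
Qed.

Lemma T2a u : -1 < u < 1 -> Dt T1 u t = ds V u t * - T2 u t.
Proof.
  intros hu. assert (h : O u t) by (apply Ot; lra). pose proof (Spos u t h) as hs.
  pose proof (geo0 X Y HX HY u t h) as g0.
  change T1 with (fun a b => Du X a b / S a b).
  rewrite Dt_div; [| apply xt; auto | apply xt; auto | lra].
  rewrite (Schw X Y HX HY X); auto. rewrite DuDtX, T1_; auto. rewrite (DS X); auto.
  change (ds X) with T1.
  apply (Rmult_eq_reg_r (S u t ^ 2)); [|apply pow_nonzero; lra]. field_simplify; [|lra]. nsatz.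
Qed.
Lemma T2b u : -1 < u < 1 -> Dt T2 u t = ds V u t * T1 u t.
Proof.
  intros hu. assert (h : O u t) by (apply Ot; lra). pose proof (Spos u t h) as hs.
  pose proof (geo0 X Y HX HY u t h) as g0.
  change T2 with (fun a b => Du Y a b / S a b).
  rewrite Dt_div; [| apply xt; auto | apply xt; auto | lra].
  rewrite (Schw X Y HX HY Y); auto. rewrite DuDtY, T1_; auto. rewrite (DS Y); auto.
  change (ds Y) with T2. change (ds X) with T1.
  apply (Rmult_eq_reg_r (S u t ^ 2)); [|apply pow_nonzero; lra]. field_simplify; [|lra]. nsatz.
Qed.

Lemma T3a u : -1 < u < 1 -> Dt (ds T1) u t =
  - ds (ds V) u t * T2 u t + ds V u t * k u t * T1 u t - k u t ^ 2 * V u t * T2 u t.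
Proof.
  intros hu. assert (h : O u t) by (apply Ot; lra). pose proof (Spos u t h) as hs.
  pose proof (geo0 X Y HX HY u t h) as g0.
  change (ds T1) with (fun a b => Du T1 a b / S a b).
  rewrite Dt_div; [| apply xt; auto | apply xt; auto | lra].
  rewrite (Schw X Y HX HY T1); auto.
  rewrite (Du_open (Dt T1) (fun a b => ds V a b * - T2 a b) t u); [| intros; apply T2a; lra | auto].
  rewrite Du_mult; [| apply xu; auto | apply exd_opp; apply xu; auto].
  rewrite Du_opp, T1_; auto. rewrite (DS (ds V)), (DS T2), (DS T1), geo2a, geo2b; auto.
  apply (Rmult_eq_reg_r (S u t ^ 2)); [|apply pow_nonzero; lra]. field_simplify; [|lra]. nsatz.
Qed.
Lemma T3b u : -1 < u < 1 -> Dt (ds T2) u t =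
  ds (ds V) u t * T1 u t + ds V u t * k u t * T2 u t + k u t ^ 2 * V u t * T1 u t.
Proof.
  intros hu. assert (h : O u t) by (apply Ot; lra). pose proof (Spos u t h) as hs.
  pose proof (geo0 X Y HX HY u t h) as g0.
  change (ds T2) with (fun a b => Du T2 a b / S a b).
  rewrite Dt_div; [| apply xt; auto | apply xt; auto | lra].
  rewrite (Schw X Y HX HY T2); auto.
  rewrite (Du_open (Dt T2) (fun a b => ds V a b * T1 a b) t u); [| intros; apply T2b; lra | auto].
  rewrite Du_mult; [| apply xu; auto | apply xu; auto].
  rewrite T1_; auto. rewrite (DS (ds V)), (DS T2), (DS T1), geo2a, geo2b; auto.
  apply (Rmult_eq_reg_r (S u t ^ 2)); [|apply pow_nonzero; lra]. field_simplify; [|lra]. nsatz.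
Qed.

Lemma T4 u : -1 < u < 1 -> Dt k u t = - ds (ds V) u t - k u t ^ 2 * V u t.
Proof.
  intros hu. assert (h : O u t) by (apply Ot; lra).
  pose proof (geo0 X Y HX HY u t h) as g0.
  transitivity (Dt (fun a b => ds T1 a b * T2 a b - ds T2 a b * T1 a b) u t).
  { unfold Dt. apply Derive_ext. intros z. apply kk_eq. }
  rewrite Dt_minus; [| apply exd_mult_; auto | apply exd_mult_; auto].
  rewrite !Dt_mult; try (apply xt; auto).
  rewrite T3a, T3b, T2a, T2b; auto. rewrite geo2a, geo2b; auto.
  set (a := T1 u t) in *. set (b := T2 u t) in *. set (p := ds (ds V) u t). set (q := ds V u t). set (kk0 := k u t). set (v0 := V u t). rewrite <- (Rmult_1_r (- p - kk0^2*v0)). rewrite <- g0. ring.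
Qed.

Definition W := fun a b => - ds (ds V) a b - k a b ^ 2 * V a b.

Lemma T5 u : -1 < u < 1 -> Dt (Kn X Y 1) u t = ds W u t - k u t * V u t * Kn X Y 1 u t.
Proof.
  intros hu. assert (h : O u t) by (apply Ot; lra). pose proof (Spos u t h) as hs.
  change (Kn X Y 1) with (fun a b => Du k a b / S a b).
  rewrite Dt_div; [| apply xt; auto | apply xt; auto | lra].
  rewrite (Schw X Y HX HY k); auto.
  rewrite (Du_open (Dt k) W t u); [| intros; apply T4; lra | auto].
  rewrite T1_; auto. rewrite (DS W), (DS k); auto.
  change (ds k) with (Kn X Y 1).
  field. lra.
Qed.

Lemma T6 u : -1 < u < 1 -> Dt (fun a b => Kn X Y 1 a b ^ 2 * S a b) u t =
  (2 * Kn X Y 1 u t * (ds W u t - k u t * V u t * Kn X Y 1 u t)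
   + Kn X Y 1 u t ^ 2 * k u t * V u t) * S u t.
Proof.
  intros hu. assert (h : O u t) by (apply Ot; lra).
  rewrite Dt_mult; [| apply ex_derive_pow; apply xt; auto | apply xt; auto].
  rewrite Dt_pow; [| apply xt; auto].
  rewrite T5, T1_; auto. simpl. ring.
Qed.
End T.
End S.

Set Default Proof Using "All".

Lemma deriv_zero_right (g : R -> R) t l : is_derive g t l -> (forall s, t <= s -> g s = 0) -> l = 0.
Proof.
  intros Hd Hz. apply is_derive_Reals in Hd.
  destruct (Req_dec l 0) as [E|E]; auto. exfalso.
  assert (he : 0 < Rabs l) by (apply Rabs_pos_lt; auto).
  destruct (Hd (Rabs l) he) as [d Hdd].
  assert (hd : 0 < d) by apply cond_pos.
  specialize (Hdd (d/2)). rewrite !Hz in Hdd; try lra.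
  assert (H : Rabs ((0 - 0) / (d / 2) - l) < Rabs l).
  { apply Hdd. lra. rewrite Rabs_pos_eq; lra. }
  replace ((0 - 0) / (d / 2) - l) with (- l) in H by (field; lra).
  rewrite Rabs_Ropp in H. lra.
Qed.

Lemma cont_eq_lim (A B : R -> R -> R) u0 t :
  continuity_2d_pt A u0 t -> continuity_2d_pt B u0 t ->
  (forall d, 0 < d -> exists v, Rabs (v - u0) < d /\ A v t = B v t) ->
  A u0 t = B u0 t.
Proof.
  intros HA HB H. destruct (Req_dec (A u0 t) (B u0 t)) as [E|E]; auto. exfalso.
  assert (he : 0 < Rabs (A u0 t - B u0 t) / 2).
  { apply Rdiv_lt_0_compat; [apply Rabs_pos_lt; lra | lra]. }
  destruct (HA (mkposreal _ he)) as [d1 H1]. destruct (HB (mkposreal _ he)) as [d2 H2].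
  assert (hd : 0 < Rmin d1 d2) by (apply Rmin_pos; apply cond_pos).
  destruct (H _ hd) as [v [hv E2]].
  assert (h1 := H1 v t). assert (h2 := H2 v t). simpl in h1, h2.
  rewrite Rminus_diag, Rabs_R0 in h1, h2.
  specialize (h1 (Rlt_le_trans _ _ _ hv (Rmin_l _ _)) (cond_pos d1)).
  specialize (h2 (Rlt_le_trans _ _ _ hv (Rmin_r _ _)) (cond_pos d2)).
  rewrite E2 in h1.
  assert (Rabs (A u0 t - B u0 t) <= Rabs (B v t - B u0 t) + Rabs (B v t - A u0 t)).
  { replace (A u0 t - B u0 t) with ((B v t - B u0 t) - (B v t - A u0 t)) by ring.
    eapply Rle_trans. apply Rabs_triang. rewrite Rabs_Ropp. lra. }
  lra.
Qed.

Lemma near_pt u0 : (u0 = -1 \/ u0 = 1) -> forall d, 0 < d -> exists v, Rabs (v - u0) < d /\ -1 < v < 1.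
Proof.
  intros hu0 d hd. pose proof (Rmin_l d 1); pose proof (Rmin_r d 1); pose proof (Rmin_pos d 1 hd Rlt_0_1).
  destruct hu0 as [-> | ->].
  - exists (-1 + Rmin d 1 / 2). split; [|lra]. rewrite Rabs_pos_eq; lra.
  - exists (1 - Rmin d 1 / 2). split; [|lra]. rewrite Rabs_left; lra.
Qed.

Section S.
Context (X Y : R -> R -> R) (HX : smooth2 X) (HY : smooth2 Y) (lam : R).
Context (HO : forall u s, -1 <= u <= 1 -> 0 <= s -> Om X Y u s).
Context (HE : forall u s, -1 <= u <= 1 -> 0 <= s ->
   Dt X u s = VV lam X Y u s * - t2 X Y u s /\ Dt Y u s = VV lam X Y u s * t1 X Y u s).

Local Notation V := (VV lam X Y).
Local Notation S := (sig X Y).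
Local Notation T1 := (t1 X Y).
Local Notation T2 := (t2 X Y).
Local Notation k := (kk X Y).
Local Notation ds := (dsF X Y).
Local Notation O := (Om X Y).
#[local] Hint Resolve gV gT1 gT2 gS gk gds gX gY gDu gKn : core.
Local Notation xu := (xu X Y HX HY).
Local Notation xt := (xt X Y HX HY).
Local Notation Spos := (Spos X Y HX HY).

Lemma DuVT2 u s : O u s -> Du (fun a b => V a b * - T2 a b) u s =
  S u s * (ds V u s * - T2 u s + V u s * (k u s * T1 u s)).
Proof.
  intros h.
  rewrite Du_mult; [| apply xu; auto | apply exd_opp; apply xu; auto].
  rewrite Du_opp. rewrite (DS X Y HX HY V), (DS X Y HX HY T2), geo2b; auto. ring.
Qed.
Lemma DuVT1 u s : O u s -> Du (fun a b => V a b * T1 a b) u s =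
  S u s * (ds V u s * T1 u s + V u s * (k u s * T2 u s)).
Proof.
  intros h.
  rewrite Du_mult; [| apply xu; auto | apply xu; auto].
  rewrite (DS X Y HX HY V), (DS X Y HX HY T1), geo2a; auto. ring.
Qed.

Lemma bdry u0 c t : 0 <= t -> (u0 = -1 \/ u0 = 1) ->
  (forall s, 0 <= s -> Du X u0 s * cos c + Du Y u0 s * sin c = 0) ->
  ds V u0 t = 0.
Proof.
  intros ht hu0 Hperp.
  assert (h : O u0 t) by (apply HO; lra).
  pose proof (Spos u0 t h) as hs.
  pose proof (geo0 X Y HX HY u0 t h) as g0.
  (* time derivative of the perpendicularity condition *)
  assert (ex1 : ex_derive (fun s => Du X u0 s) t) by (apply xt; auto).
  assert (ex2 : ex_derive (fun s => Du Y u0 s) t) by (apply xt; auto).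
  assert (D0 : Derive (fun s => Du X u0 s * cos c + Du Y u0 s * sin c) t = 0).
  { apply (deriv_zero_right (fun s => Du X u0 s * cos c + Du Y u0 s * sin c) t).
    - apply Derive_correct. apply exd_plus; apply ex_derive_mult; auto; apply ex_derive_const.
    - intros; apply Hperp; lra. }
  rewrite Dplus in D0; try (apply ex_derive_mult; auto; apply ex_derive_const).
  rewrite (Derive_mult (fun s => Du X u0 s)), (Derive_mult (fun s => Du Y u0 s)), !Derive_const in D0;
    auto; try apply ex_derive_const.
  change (Derive (fun s => Du X u0 s) t) with (Dt (Du X) u0 t) in D0.
  change (Derive (fun s => Du Y u0 s) t) with (Dt (Du Y) u0 t) in D0.
  replace (Dt (Du X) u0 t * cos c + Du X u0 t * 0 + (Dt (Du Y) u0 t * sin c + Du Y u0 t * 0))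
    with (Dt (Du X) u0 t * cos c + Dt (Du Y) u0 t * sin c) in D0 by ring.
  rewrite (Schw X Y HX HY X), (Schw X Y HX HY Y) in D0; auto.
  assert (EX : Du (Dt X) u0 t = Du (fun a b => V a b * - T2 a b) u0 t).
  { apply cont_eq_lim.
    - apply (cont2 X Y HX HY (Du (Dt X))); auto. apply gDu; auto. apply Gi_Dt; auto.
    - apply (cont2 X Y HX HY (Du (fun a b => V a b * - T2 a b))); auto. apply gDu; auto. apply Gi_mult; auto. apply Gi_opp; auto.
    - intros d hd. destruct (near_pt u0 hu0 d hd) as [v [h1 h2]]. exists v. split; auto.
      apply Du_open; auto. intros; apply HE; lra. }
  assert (EY : Du (Dt Y) u0 t = Du (fun a b => V a b * T1 a b) u0 t).
  { apply cont_eq_lim.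
    - apply (cont2 X Y HX HY (Du (Dt Y))); auto. apply gDu; auto. apply Gi_Dt; auto.
    - apply (cont2 X Y HX HY (Du (fun a b => V a b * T1 a b))); auto. apply gDu; auto. apply Gi_mult; auto.
    - intros d hd. destruct (near_pt u0 hu0 d hd) as [v [h1 h2]]. exists v. split; auto.
      apply Du_open; auto. intros; apply HE; lra. }
  rewrite EX, EY, DuVT2, DuVT1 in D0; auto.
  assert (P : Du X u0 t * cos c + Du Y u0 t * sin c = 0) by (apply Hperp; auto).
  rewrite (DS X Y HX HY X), (DS X Y HX HY Y) in P; auto.
  change (ds X) with T1 in P. change (ds Y) with T2 in P.
  assert (P' : T1 u0 t * cos c + T2 u0 t * sin c = 0).
  { apply Rmult_eq_reg_l with (S u0 t); lra. }
  assert (D1 : ds V u0 t * (- T2 u0 t * cos c + T1 u0 t * sin c) = 0).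
  { apply Rmult_eq_reg_l with (S u0 t); [|lra].
    transitivity (S u0 t * (ds V u0 t * - T2 u0 t + V u0 t * (k u0 t * T1 u0 t)) * cos c +
      S u0 t * (ds V u0 t * T1 u0 t + V u0 t * (k u0 t * T2 u0 t)) * sin c
      - S u0 t * V u0 t * k u0 t * (T1 u0 t * cos c + T2 u0 t * sin c)).
    ring. rewrite D0, P'. ring. }
  assert (N : (- T2 u0 t * cos c + T1 u0 t * sin c) ^ 2 = 1).
  { pose proof (sin2_cos2 c).
    transitivity ((T1 u0 t ^ 2 + T2 u0 t ^ 2) * (sin c ^ 2 + cos c ^ 2) - (T1 u0 t * cos c + T2 u0 t * sin c) ^ 2).
    ring. rewrite P', g0. rewrite <- !Rsqr_pow2, H. unfold Rsqr. ring. }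
  apply Rmult_integral in D1. destruct D1 as [D1|D1]; auto.
  rewrite D1 in N. simpl in N. lra.
Qed.
End S.

Set Default Proof Using "All".

Lemma c2_c1 (F : R -> R -> R) u t : continuity_2d_pt F u t -> continuity_pt (fun v => F v t) u.
Proof.
  intros H eps heps. destruct (H (mkposreal eps heps)) as [d Hd].
  exists d. split; [apply cond_pos|]. intros y [_ hy]. simpl in hy. unfold R_dist in hy.
  simpl. unfold R_dist. apply Hd; auto. rewrite Rminus_diag, Rabs_R0; apply cond_pos.
Qed.
Lemma c2_c1' (F : R -> R -> R) u t : continuity_2d_pt F u t -> continuous (fun v => F v t) u.
Proof. intros H. apply continuity_pt_filterlim. apply c2_c1; auto. Qed.

Lemma c2_swap (F : R -> R -> R) u t : continuity_2d_pt F u t -> continuity_2d_pt (fun a b => F b a) t u.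
Proof.
  intros H eps. destruct (H eps) as [d Hd]. exists d. intros a b ha hb. apply Hd; auto.
Qed.

Lemma isR_plus f g a b A B : is_RInt f a b A -> is_RInt g a b B -> is_RInt (fun x => f x + g x) a b (A + B).
Proof. intros; apply (is_RInt_plus f g); auto. Qed.
Lemma isR_minus f g a b A B : is_RInt f a b A -> is_RInt g a b B -> is_RInt (fun x => f x - g x) a b (A - B).
Proof. intros; apply (is_RInt_minus f g); auto. Qed.
Lemma isR_scal f a b c A : is_RInt f a b A -> is_RInt (fun x => c * f x) a b (c * A).
Proof. intros; apply (is_RInt_scal f); auto. Qed.

Lemma isR_unique (f : R -> R) a b l : is_RInt f a b l -> RInt f a b = l.
Proof. apply (is_RInt_unique (V := R_CompleteNormedModule)). Qed.
Lemma isR_correct (f : R -> R) a b : ex_RInt f a b -> is_RInt f a b (RInt f a b).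
Proof. apply (RInt_correct (V := R_CompleteNormedModule)). Qed.
Lemma exR_cont (f : R -> R) a b : (forall z, Rmin a b <= z <= Rmax a b -> continuous f z) -> ex_RInt f a b.
Proof. apply (ex_RInt_continuous (V := R_CompleteNormedModule)). Qed.

Lemma supnorm_ge (w : R -> R) : (forall u, -1 <= u <= 1 -> continuity_pt w u) ->
  forall u, -1 <= u <= 1 -> Rabs (w u) <= supnorm w.
Proof.
  intros Hc u hu.
  destruct (continuity_ab_maj (fun v => Rabs (w v)) (-1) 1) as [M [HM hM]]; [lra| |].
  { intros c hc. apply continuity_pt_comp with (f1 := w) (f2 := Rabs); auto. apply Rcontinuity_abs. }
  unfold supnorm.
  destruct (Lub_Rbar_correct (fun r => exists u, -1 <= u <= 1 /\ r = Rabs (w u))) as [Hub Hlub].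
  assert (h1 := Hub (Rabs (w u)) (ex_intro _ u (conj hu eq_refl))).
  assert (h2 := Hlub (Finite (Rabs (w M)))).
  destruct (Lub_Rbar _) as [l| |]; simpl in *; auto.
  - exfalso. apply h2. intros r [v [hv ->]]. simpl. apply HM; auto.
  - destruct h1.
Qed.

Section S.
Context (X Y : R -> R -> R) (HX : smooth2 X) (HY : smooth2 Y).
Context (HO : forall u s, -1 <= u <= 1 -> 0 <= s -> Om X Y u s).

Lemma LOC t : 0 <= t -> exists d, 0 < d /\ forall s u, Rabs (s - t) < d -> -1 <= u <= 1 -> Om X Y u s.
Proof.
  intros ht.
  set (g := fun a b => Du X a b * Du X a b + Du Y a b * Du Y a b).
  assert (Hg : forall a b, continuity_2d_pt g a b).
  { intros a b.
    assert (c1 : continuity_2d_pt (Du X) a b).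
    { apply cont_conv. apply (proj1 (proj2 (HX 1%nat 0%nat))). }
    assert (c2 : continuity_2d_pt (Du Y) a b).
    { apply cont_conv. apply (proj1 (proj2 (HY 1%nat 0%nat))). }
    unfold g. apply continuity_2d_pt_plus; apply continuity_2d_pt_mult; auto. }
  assert (gO : forall a b, Om X Y a b <-> 0 < g a b).
  { intros a b. unfold Om, g. split; intros; nra. }
  destruct (continuity_ab_min (fun u => g u t) (-1) 1) as [m [Hm hm]]; [lra| intros; apply c2_c1; auto |].
  assert (mpos : 0 < g m t) by (apply gO; apply HO; auto).
  destruct (uniform_continuity_2d_1d g (-1) 1 t (fun x _ => Hg x t) (mkposreal _ mpos)) as [d Hd].
  exists d. split; [apply cond_pos|]. intros s u hs hu. apply gO.
  assert (E := Hd u t u s hu ltac:(pose proof (cond_pos d); lra) hu ltac:(apply Rabs_def2 in hs; lra)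
                 ltac:(rewrite Rminus_diag, Rabs_R0; apply cond_pos)).
  cbn [pos] in E. apply Rabs_def2 in E. specialize (Hm u hu). lra.
Qed.
End S.

Set Default Proof Using "All".

Lemma Du_scal (F : R -> R -> R) c (u s : R) : Du (fun a b => c * F a b) u s = c * Du F u s.
Proof. unfold Du; cbv beta; apply (Derive_scal (fun v => F v s)). Qed.

Section S.
Context (X Y : R -> R -> R) (HX : smooth2 X) (HY : smooth2 Y) (lam : R).
Context (HO : forall u s, -1 <= u <= 1 -> 0 <= s -> Om X Y u s).

Local Notation V := (VV lam X Y).
Local Notation S := (sig X Y).
Local Notation k := (kk X Y).
Local Notation ds := (dsF X Y).
Local Notation O := (Om X Y).
Local Notation K1 := (Kn X Y 1).
Local Notation K2 := (Kn X Y 2).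
Local Notation K3 := (Kn X Y 3).
Local Notation Wf := (W X Y lam).
#[local] Hint Resolve gV gT1 gT2 gS gk gds gX gY gDu gKn : core.
Local Notation xu := (xu X Y HX HY).
Local Notation xt := (xt X Y HX HY).
Local Notation Spos := (Spos X Y HX HY).
Local Notation DS := (DS X Y HX HY).

Ltac gi := repeat match goal with
  | |- Ginf _ (fun a b => @?F a b + @?H a b) => apply (Gi_plus X Y HX HY F H)
  | |- Ginf _ (fun a b => @?F a b - @?H a b) => apply (Gi_minus X Y HX HY F H)
  | |- Ginf _ (fun a b => @?F a b * @?H a b) => apply (Gi_mult X Y HX HY F H)
  | |- Ginf _ (fun a b => - @?F a b) => apply (Gi_opp X Y HX HY F)
  | |- Ginf _ (fun a b => @?F a b ^ ?n) => apply (Gi_pow X Y HX HY F n)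
  | |- Ginf _ (fun a b => Kn X Y ?n a b) => apply (gKn X Y HX HY n)
  | |- Ginf _ (fun a b => kk X Y a b) => apply (gk X Y HX HY)
  | |- Ginf _ (fun a b => sig X Y a b) => apply (gS X Y HX HY)
  | |- Ginf _ (fun a b => VV lam X Y a b) => apply (gV X Y HX HY lam)
  | |- Ginf _ (fun a b => dsF X Y ?F a b) => apply (gds X Y HX HY F)
  | |- Ginf _ (fun a b => W X Y lam a b) => unfold W
  | |- Ginf _ (fun a b => ?c) => apply (Gi_const X Y HX HY c)
  | |- Ginf _ (dsF X Y ?F) => apply (gds X Y HX HY F)
  | |- Ginf _ (W X Y lam) => unfold W
  | |- Ginf _ (VV lam X Y) => apply (gV X Y HX HY lam)
  | |- Ginf _ (kk X Y) => apply (gk X Y HX HY)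
  end.

Lemma gW : Ginf O Wf.
Proof. gi. Qed.

Lemma dV_eq u s : O u s -> ds V u s = K3 u s + 3/2 * k u s ^ 2 * K1 u s - lam * K1 u s.
Proof.
  intros h. pose proof (Spos u s h) as hs.
  assert (E : Du V u s = S u s * (K3 u s + 3/2 * k u s ^ 2 * K1 u s - lam * K1 u s)).
  { change V with (fun a b => K2 a b + 1/2 * k a b ^ 3 - lam * k a b).
    rewrite Du_minus; [| apply exd_plus; [apply xu; auto | apply ex_derive_scal, ex_derive_pow, xu; auto]
                       | apply ex_derive_scal, xu; auto].
    rewrite Du_plus; [| apply xu; auto | apply ex_derive_scal, ex_derive_pow, xu; auto].
    rewrite !Du_scal, Du_pow; [| apply xu; auto].
    rewrite (DS K2), (DS k); auto. change (ds K2) with K3. change (ds k) with K1.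
    change (INR 3) with (1+1+1). cbn [Nat.pred]. cbv beta. field. }
  unfold dsF. rewrite E. field. lra.
Qed.

Context (HE : forall u s, -1 <= u <= 1 -> 0 <= s ->
   Dt X u s = VV lam X Y u s * - t2 X Y u s /\ Dt Y u s = VV lam X Y u s * t1 X Y u s).

Section T.
Context (t : R) (ht : 0 <= t) (kb : R).

Definition Psi u := 2 * K1 u t * Wf u t + 2 * K2 u t * ds V u t + k u t ^ 5 * K1 u t
  - 2 * lam * k u t ^ 3 * K1 u t - 3 * k u t ^ 2 * K1 u t * K2 u t + 2 * lam * K1 u t * K2 u t
  + 5/3 * k u t * K1 u t ^ 3 + 5 * kb ^ 2 * K1 u t * K2 u t.
Definition I0 a b := (2 * K1 a b * (ds Wf a b - k a b * V a b * K1 a b) + K1 a b ^ 2 * k a b * V a b) * S a b.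
Definition Jp a b := -2 * K3 a b ^ 2 - 2 * lam * K2 a b ^ 2 + 5 * (k a b - kb) ^ 2 * K2 a b ^ 2
  + 10 * kb * (k a b - kb) * K2 a b ^ 2 - 5 * kb ^ 2 * K1 a b * K3 a b - 5/3 * K1 a b ^ 4
  - 11/2 * k a b ^ 4 * K1 a b ^ 2 + 7 * lam * k a b ^ 2 * K1 a b ^ 2.

Lemma dPsi u : O u t -> is_derive Psi u (I0 u t - Jp u t * S u t).
Proof.
  intros h. pose proof (Spos u t h) as hs.
  set (f1 := fun v => K1 v t). set (f2 := fun v => K2 v t). set (fk := fun v => k v t).
  set (fW := fun v => Wf v t). set (fd := fun v => ds V v t).
  assert (d1 : Derive f1 u = S u t * K2 u t) by exact (DS K1 u t h).
  assert (d2 : Derive f2 u = S u t * K3 u t) by exact (DS K2 u t h).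
  assert (dk : Derive fk u = S u t * K1 u t) by exact (DS k u t h).
  assert (dW : Derive fW u = S u t * ds Wf u t) by exact (DS Wf u t h).
  assert (dd : Derive fd u = S u t * ds (ds V) u t) by exact (DS (ds V) u t h).
  assert (e1 : ex_derive f1 u) by (apply xu; auto).
  assert (e2 : ex_derive f2 u) by (apply xu; auto).
  assert (ek : ex_derive fk u) by (apply xu; auto).
  assert (eW : ex_derive fW u) by (apply xu; auto; apply gW).
  assert (ed : ex_derive fd u) by (apply xu; auto).
  unfold Psi.
  change (is_derive (fun v => 2 * f1 v * fW v + 2 * f2 v * fd v + fk v ^ 5 * f1 v
    - 2 * lam * fk v ^ 3 * f1 v - 3 * fk v ^ 2 * f1 v * f2 v + 2 * lam * f1 v * f2 v
    + 5/3 * fk v * f1 v ^ 3 + 5 * kb ^ 2 * f1 v * f2 v) u (I0 u t - Jp u t * S u t)).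
  assert (q1 : f1 u = K1 u t) by reflexivity. assert (q2 : f2 u = K2 u t) by reflexivity.
  assert (qk : fk u = k u t) by reflexivity. assert (qW : fW u = Wf u t) by reflexivity.
  assert (qd : fd u = ds V u t) by reflexivity.
  clearbody f1 f2 fk fW fd.
  auto_derive.
  { repeat split; auto. }
  change (Derive (fun x => f1 x) u) with (Derive f1 u).
  change (Derive (fun x => f2 x) u) with (Derive f2 u).
  change (Derive (fun x => fk x) u) with (Derive fk u).
  change (Derive (fun x => fW x) u) with (Derive fW u).
  change (Derive (fun x => fd x) u) with (Derive fd u).
  rewrite d1, d2, dk, dW, dd.
  rewrite q1, q2, qk, qW, qd. unfold I0, Jp. rewrite (dV_eq u t h).
  unfold W. unfold VV. field.
Qed.

Lemma minusR (a b : R) : minus a b = a - b.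
Proof. reflexivity. Qed.

Lemma contF (F : R -> R -> R) u s : Ginf O F -> O u s -> continuous (fun v => F v s) u.
Proof. intros; apply c2_c1'; apply (cont2 X Y HX HY); auto. Qed.

Context (HK1a : K1 (-1) t = 0) (HK1b : K1 1 t = 0) (HdVa : ds V (-1) t = 0) (HdVb : ds V 1 t = 0).

Lemma IntZero : is_RInt (fun u => I0 u t - Jp u t * S u t) (-1) 1 0.
Proof.
  replace 0 with (minus (Psi 1) (Psi (-1))).
  apply (is_RInt_derive (V := R_CompleteNormedModule) Psi (fun u => I0 u t - Jp u t * S u t)).
  - intros x hx. rewrite Rmin_left, Rmax_right in hx by lra. apply dPsi. apply HO; auto.
  - intros x hx. rewrite Rmin_left, Rmax_right in hx by lra.
    apply (contF (fun a b => I0 a b - Jp a b * S a b)); [| apply HO; auto]. unfold I0, Jp. gi.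
  - rewrite minusR. unfold Psi. rewrite HK1a, HK1b, HdVa, HdVb. match goal with |- ?a = _ => change (a = (0:R)) end. field.
Qed.

Lemma exJp : ex_RInt (fun u => Jp u t * S u t) (-1) 1.
Proof.
  apply (ex_RInt_continuous (V := R_CompleteNormedModule)). intros x hx. rewrite Rmin_left, Rmax_right in hx by lra.
  apply (contF (fun a b => Jp a b * S a b)); [| apply HO; auto]. unfold Jp. gi.
Qed.

Lemma DerivEq : Derive (fun s => RInt (fun u => K1 u s ^ 2 * S u s) (-1) 1) t
  = RInt (fun u => Jp u t * S u t) (-1) 1.
Proof.
  set (F := fun a b => K1 a b ^ 2 * S a b).
  assert (gF : Ginf O F) by (unfold F; gi).
  destruct (LOC X Y HX HY HO t ht) as [d [hd Hd]].
  assert (H1 : is_derive (fun s => RInt (fun u => F u s) (-1) 1) t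
                 (RInt (fun u => Derive (fun z => F u z) t) (-1) 1)).
  { apply (is_derive_RInt_param (fun s u => F u s)).
    - exists (mkposreal d hd). intros s0 hs0 u hu. apply ballR' in hs0. simpl in hs0.
      rewrite Rmin_left, Rmax_right in hu by lra.
      apply xt; auto.
    - intros u hu. rewrite Rmin_left, Rmax_right in hu by lra.
      apply (c2_swap (Dt F)). apply (cont2 X Y HX HY). apply Gi_Dt; auto. apply HO; auto.
    - exists (mkposreal d hd). intros s0 hs0. apply ballR' in hs0. simpl in hs0.
      apply (ex_RInt_continuous (V := R_CompleteNormedModule)). intros u hu. rewrite Rmin_left, Rmax_right in hu by lra.
      apply contF; auto. }
  apply is_derive_unique in H1. unfold F in H1.
  transitivity (RInt (fun u => Derive (fun z => K1 u z ^ 2 * S u z) t) (-1) 1); [exact H1|].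
  transitivity (RInt (fun u => (I0 u t - Jp u t * S u t) + Jp u t * S u t) (-1) 1).
  { apply RInt_ext. intros x hx. rewrite Rmin_left, Rmax_right in hx by lra.
    change (Derive (fun z => K1 x z ^ 2 * S x z) t) with (Dt (fun a b => K1 a b ^ 2 * S a b) x t).
    rewrite (T6 X Y HX HY lam HO HE t ht x hx). unfold I0. match goal with |- @eq _ ?a ?b => change (@eq R a b) end. ring. }
  apply isR_unique. replace (RInt (fun u => Jp u t * S u t) (-1) 1)
    with (0 + RInt (fun u => Jp u t * S u t) (-1) 1) by ring.
  apply isR_plus. apply IntZero. apply isR_correct. apply exJp.
Qed.
End T.
End S.

Lemma key_ineq (K1 K2 K3 kv kb lam Sn s : R) : 0 < lam -> (kv - kb) ^ 2 <= Sn ^ 2 -> 0 <= s ->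
  (-2 * K3 ^ 2 - 2 * lam * K2 ^ 2 + 5 * (kv - kb) ^ 2 * K2 ^ 2
  + 10 * kb * (kv - kb) * K2 ^ 2 - 5 * kb ^ 2 * K1 * K3 - 5/3 * K1 ^ 4
  - 11/2 * kv ^ 4 * K1 ^ 2 + 7 * lam * kv ^ 2 * K1 ^ 2) * s <=
  (- (1/8) * K3 ^ 2 - 13/6 * kb ^ 4 * K1 ^ 2 - 2 * lam * K2 ^ 2
   + 14 * lam * (Sn ^ 2 + kb ^ 2) * K1 ^ 2 - 22 * kb ^ 3 * ((kv - kb) * K1 ^ 2)
   + 5 * ((kv - kb) ^ 2 * K2 ^ 2) + 10 * kb * ((kv - kb) * K2 ^ 2)) * s.
Proof.
  intros hl hw hs. apply Rmult_le_compat_r; auto.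
  set (w := kv - kb) in *. replace kv with (kb + w) by (unfold w; ring).
  apply Rminus_le.
  match goal with |- ?A - ?B <= 0 => assert (E : B - A =
    15/8*(K3+4/3*kb^2*K1)^2 + 5/3*K1^4 + 11/2*w^2*K1^2*((w+2*kb)^2+2*kb^2)
    + 7*lam*(kb-w)^2*K1^2 + 14*lam*(Sn^2-w^2)*K1^2) by field end.
  assert (0 <= 15/8*(K3+4/3*kb^2*K1)^2) by (apply Rmult_le_pos; [lra | apply pow2_ge_0]).
  assert (0 <= 5/3*K1^4) by (apply Rmult_le_pos; [lra | replace (K1^4) with ((K1^2)^2) by ring; apply pow2_ge_0]).
  assert (0 <= 11/2*w^2*K1^2*((w+2*kb)^2+2*kb^2)).
  { pose proof (pow2_ge_0 (w+2*kb)); pose proof (pow2_ge_0 kb).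
    pose proof (pow2_ge_0 w); pose proof (pow2_ge_0 K1).
    assert (0 <= w^2*K1^2) by (apply Rmult_le_pos; auto).
    assert (0 <= w^2*K1^2*((w+2*kb)^2+2*kb^2)) by (apply Rmult_le_pos; lra).
    lra. }
  assert (0 <= 7*lam*(kb-w)^2*K1^2).
  { pose proof (pow2_ge_0 (kb-w)); pose proof (pow2_ge_0 K1).
    assert (0 <= (kb-w)^2*K1^2) by (apply Rmult_le_pos; auto).
    assert (0 <= lam*((kb-w)^2*K1^2)) by (apply Rmult_le_pos; lra). lra. }
  assert (0 <= 14*lam*(Sn^2-w^2)*K1^2).
  { pose proof (pow2_ge_0 K1).
    assert (0 <= (Sn^2-w^2)*K1^2) by (apply Rmult_le_pos; lra).
    assert (0 <= lam*((Sn^2-w^2)*K1^2)) by (apply Rmult_le_pos; lra). lra. }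
  lra.
Qed.

Lemma contG X Y (HX : smooth2 X) (HY : smooth2 Y) (F : R -> R -> R) u s :
  Ginf (Om X Y) F -> Om X Y u s -> continuous (fun v => F v s) u.
Proof. intros; apply c2_c1'; apply (cont2 X Y HX HY); auto. Qed.

Ltac gi2 X Y HX HY lam := repeat match goal with
  | |- Ginf _ (fun a b => @?F a b + @?H a b) => apply (Gi_plus X Y HX HY F H)
  | |- Ginf _ (fun a b => @?F a b - @?H a b) => apply (Gi_minus X Y HX HY F H)
  | |- Ginf _ (fun a b => @?F a b * @?H a b) => apply (Gi_mult X Y HX HY F H)
  | |- Ginf _ (fun a b => - @?F a b) => apply (Gi_opp X Y HX HY F)
  | |- Ginf _ (fun a b => @?F a b ^ ?n) => apply (Gi_pow X Y HX HY F n)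
  | |- Ginf _ (fun a b => Kn X Y ?n a b) => apply (gKn X Y HX HY n)
  | |- Ginf _ (fun a b => kk X Y a b) => apply (gk X Y HX HY)
  | |- Ginf _ (fun a b => sig X Y a b) => apply (gS X Y HX HY)
  | |- Ginf _ (fun a b => ?c) => apply (Gi_const X Y HX HY c)
  end.

Ltac build := match goal with
  | |- is_RInt _ _ _ (?A + ?B) => eapply isR_plus; [build | build]
  | |- is_RInt _ _ _ (?A - ?B) => eapply isR_minus; [build | build]
  | |- is_RInt _ _ _ (?c * ?r) => eapply isR_scal; build
  | |- is_RInt _ _ _ ?r => apply isR_correct
  end.

Theorem mainTheorem3 (th1 th2 lam : R) (X Y : R -> R -> R) :
  0 <= th2 -> th2 < th1 -> th1 < 2 * PI ->
  0 < lam ->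
  elastic_flow_cone lam th1 th2 X Y ->
  forall t : R, 0 <= t ->
    let x := fun v => X v t in
    let y := fun v => Y v t in
    let kb := kbar x y in
    let Iks2 := arcint x y (fun u => (kder x y 1 u) ^ 2) in
    Derive (fun s => arcint (fun v => X v s) (fun v => Y v s)
                        (fun u => (kder (fun v => X v s) (fun v => Y v s) 1 u) ^ 2)) t
    <= - (1/8) * arcint x y (fun u => (kder x y 3 u) ^ 2)
       - (13/6) * kb ^ 4 * Iks2
       - 2 * lam * arcint x y (fun u => (kder x y 2 u) ^ 2)
       + 14 * lam * ((supnorm (fun u => curv x y u - kb)) ^ 2 + kb ^ 2) * Iks2
       - 22 * kb ^ 3 * arcint x y (fun u => (curv x y u - kb) * (kder x y 1 u) ^ 2)
       + 5 * arcint x y (fun u => (curv x y u - kb) ^ 2 * (kder x y 2 u) ^ 2)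
       + 10 * kb * arcint x y (fun u => (curv x y u - kb) * (kder x y 2 u) ^ 2).
Proof.
  intros _ _ _ Hlam Hflow t ht. cbv zeta.
  set (kb := kbar (fun v => X v t) (fun v => Y v t)).
  destruct Hflow as [HX [HY [Hreg [Hev Hbc]]]].
  assert (HO : forall u s, -1 <= u <= 1 -> 0 <= s -> Om X Y u s).
  { intros u s hu hs. specialize (Hreg u s hu hs). unfold Om.
    destruct (Rle_or_lt (Du X u s ^ 2 + Du Y u s ^ 2) 0) as [hle|hlt]; auto.
    exfalso. apply Hreg.
    assert (E : Du X u s ^ 2 + Du Y u s ^ 2 = 0) by nra.
    change (sqrt (Du X u s ^ 2 + Du Y u s ^ 2) = 0). rewrite E. apply sqrt_0. }
  assert (HE : forall u s, -1 <= u <= 1 -> 0 <= s ->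
     Dt X u s = VV lam X Y u s * - t2 X Y u s /\ Dt Y u s = VV lam X Y u s * t1 X Y u s).
  { intros u s hu hs. pose proof (Hev u s hu hs) as e. cbv zeta in e. destruct e as [e1 e2].
    split; [exact e1 | exact e2]. }
  assert (HB : forall s, 0 <= s ->
     Du X (-1) s * cos th1 + Du Y (-1) s * sin th1 = 0 /\
     Du X 1 s * cos th2 + Du Y 1 s * sin th2 = 0 /\
     Kn X Y 1 (-1) s = 0 /\ Kn X Y 1 1 s = 0).
  { intros s hs. pose proof (Hbc s hs) as e. cbv zeta in e.
    destruct e as [_ [_ [_ [e1 [e2 [e3 e4]]]]]]. split; [exact e1|split; [exact e2|split; [exact e3|exact e4]]]. }
  assert (HdVa : dsF X Y (VV lam X Y) (-1) t = 0).
  { apply (bdry X Y HX HY lam HO HE (-1) th1 t ht (or_introl eq_refl)).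
    intros s hs; apply (HB s hs). }
  assert (HdVb : dsF X Y (VV lam X Y) 1 t = 0).
  { apply (bdry X Y HX HY lam HO HE 1 th2 t ht (or_intror eq_refl)).
    intros s hs; apply (HB s hs). }
  destruct (HB t ht) as [_ [_ [HK1a HK1b]]].
  pose proof (DerivEq X Y HX HY lam HO HE t ht kb HK1a HK1b HdVa HdVb) as DE.
  apply Rle_trans with (RInt (fun u => Jp X Y lam kb u t * sig X Y u t) (-1) 1).
  { right. exact DE. }
  assert (HS : forall u, -1 <= u <= 1 -> (kk X Y u t - kb) ^ 2 <= (supnorm (fun u => kk X Y u t - kb)) ^ 2).
  { intros u hu.
    assert (Hc : forall z, -1 <= z <= 1 -> continuity_pt (fun u => kk X Y u t - kb) z).
    { intros z hz. apply (c2_c1 (fun a b => kk X Y a b - kb)). apply (cont2 X Y HX HY).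
      gi2 X Y HX HY lam. apply HO; auto. }
    pose proof (supnorm_ge (fun u => kk X Y u t - kb) Hc u hu) as H. cbv beta in H.
    rewrite <- pow2_abs. apply pow_incr. split; auto. apply Rabs_pos. }
  change (supnorm (fun u => curv (fun v => X v t) (fun v => Y v t) u - kb))
    with (supnorm (fun u => kk X Y u t - kb)).
  set (Sn := supnorm (fun u => kk X Y u t - kb)) in *.
  set (Rx := fun a b => - (1/8) * Kn X Y 3 a b ^ 2 - 13/6 * kb ^ 4 * Kn X Y 1 a b ^ 2 - 2 * lam * Kn X Y 2 a b ^ 2
   + 14 * lam * (Sn ^ 2 + kb ^ 2) * Kn X Y 1 a b ^ 2 - 22 * kb ^ 3 * ((kk X Y a b - kb) * Kn X Y 1 a b ^ 2)
   + 5 * ((kk X Y a b - kb) ^ 2 * Kn X Y 2 a b ^ 2) + 10 * kb * ((kk X Y a b - kb) * Kn X Y 2 a b ^ 2)).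
  apply Rle_trans with (RInt (fun u => Rx u t * sig X Y u t) (-1) 1).
  { apply RInt_le; [lra | | |].
    - apply exR_cont. intros z hz. rewrite Rmin_left, Rmax_right in hz by lra.
      apply (contG X Y HX HY (fun a b => Jp X Y lam kb a b * sig X Y a b)); [| apply HO; auto].
      unfold Jp. gi2 X Y HX HY lam.
    - apply exR_cont. intros z hz. rewrite Rmin_left, Rmax_right in hz by lra.
      apply (contG X Y HX HY (fun a b => Rx a b * sig X Y a b)); [| apply HO; auto].
      unfold Rx. gi2 X Y HX HY lam.
    - intros u hu. unfold Jp, Rx. apply key_ineq; auto. apply HS; lra.
      apply Rlt_le, (Spos X Y HX HY). apply HO; auto; lra. }
  right. apply isR_unique. eapply is_RInt_ext; [| build].
  - intros x0 _. cbv beta. unfold Rx, Kn, kk, sig.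
    match goal with |- @eq _ ?a ?b => change (@eq R a b) end. field.
  - all: cbv beta; apply exR_cont; intros z hz; rewrite Rmin_left, Rmax_right in hz by lra;
    match goal with
    | |- continuous (fun u => kder _ _ ?n u ^ 2 * speed _ _ u) _ =>
        apply (contG X Y HX HY (fun a b => Kn X Y n a b ^ 2 * sig X Y a b))
    | |- continuous (fun u => (curv _ _ u - _) * kder _ _ ?n u ^ 2 * speed _ _ u) _ =>
        apply (contG X Y HX HY (fun a b => (kk X Y a b - kb) * Kn X Y n a b ^ 2 * sig X Y a b))
    | |- continuous (fun u => (curv _ _ u - _) ^ 2 * kder _ _ ?n u ^ 2 * speed _ _ u) _ =>
        apply (contG X Y HX HY (fun a b => (kk X Y a b - kb) ^ 2 * Kn X Y n a b ^ 2 * sig X Y a b))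
    end; [gi2 X Y HX HY lam | apply HO; lra].
Qed.
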